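(* Let $d$ and $k$ be positive integers with $k\le d$. The number of $312$-avoiding affine permutations in $\widetilde{\mathfrak S}_d$ that have exactly $k$ cut points modulo $d$ is $\binom{2d-k-1}{d-1}$.
   Context: An affine permutation $\pi\in\widetilde{\mathfrak S}_d$ is a bijection $\pi:\mathbb Z\to\mathbb Z$ such that $\pi(i+d)=\pi(i)+d$ for all $i\in\mathbb Z$ and $\sum_{i=0}^{d-1}(\pi(i)-i)=0$. It is $312$-avoiding if there are no integers $i<j<k$ with $\pi(j)<\pi(k)<\pi(i)$. A cut point of $\pi$ is an integer $j$ such that $\pi(i)<\pi(k)$ for all integers $i\le j<k$. If $j$ is a cut point then so is every integer congruent to $j$ modulo $d$; ''number of cut points modulo $d$'' means the number of residue classes modulo $d$ consisting of cut points. *)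

(* Defs.v *)
From mathcomp Require Import all_boot all_order all_algebra.
Set Implicit Arguments. Unset Strict Implicit. Unset Printing Implicit Defensive.
Import Order.TTheory GRing.Theory Num.Theory.
Local Open Scope ring_scope.

Definition is_affine_perm (d : nat) (p : int -> int) : Prop :=
  bijective p /\
  (forall i : int, p (i + d%:Z) = p i + d%:Z) /\
  \sum_(i < d) (p (Posz i) - Posz i) = 0.

Definition avoids312 (p : int -> int) : Prop :=
  ~ exists i j k : int, [/\ i < j, j < k, p j < p k & p k < p i].

Definition is_cut_point (p : int -> int) (j : int) : Prop :=
  forall i k : int, i <= j -> j < k -> p i < p k.

Definition has_cut_classes (d : nat) (p : int -> int) (k : nat) : Prop :=
  exists S : {set 'I_d}, #|S| = k /\
    forall r : 'I_d, r \in S <-> is_cut_point p (Posz r).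

(* window notation [p(0); ...; p(d-1)], which determines an affine permutation *)
Definition window (d : nat) (p : int -> int) : seq int :=
  [seq p (Posz i) | i <- iota 0 d].

(* Main.v *)
Require Import Defs.
From mathcomp Require Import all_boot all_order all_algebra.
From mathcomp Require Import zify.
Set Warnings "-notation-overridden,-ambiguous-paths".
Module MG.
Set Implicit Arguments. Unset Strict Implicit. Unset Printing Implicit Defensive.
Import Order.TTheory GRing.Theory Num.Theory.

Section Greedy.
Variable Fl : nat -> nat.

Definition pick (n : nat) (s : seq nat) : nat :=
  \max_(v < (Fl n).+1 | (v:nat) \notin s) v.

Fixpoint gr (n : nat) : seq nat :=
  if n is m.+1 then rcons (gr m) (pick m (gr m)) else [::].

Definition sg x := pick x (gr x).

Lemma gr_mk n : gr n = mkseq sg n.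
Proof.
elim: n => [|n IH] //=. by rewrite IH /mkseq -addn1 iotaD map_cat /= -cats1 /sg IH.
Qed.

Lemma size_gr n : size (gr n) = n.
Proof. by rewrite gr_mk size_mkseq. Qed.

Lemma pick_ex n s : (size s <= Fl n)%N -> exists v : 'I_(Fl n).+1, (v : nat) \notin s.
Proof.
move=> hs; apply/existsP; case: existsP => // hn; exfalso.
have hall : forall x : 'I_(Fl n).+1, ~~ ((x:nat) \notin s) by move=> x; apply/negP => hx; apply: hn; exists x.
have sub : {subset iota 0 (Fl n).+1 <= s}.
  move=> v; rewrite mem_iota add0n => /= hv.
  by have := hall (Ordinal hv); rewrite negbK.
have := uniq_leq_size (iota_uniq 0 (Fl n).+1) sub.
rewrite size_iota; lia.
Qed.

Lemma pick_spec n s : (size s <= Fl n)%N ->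
  [/\ pick n s \notin s, (pick n s <= Fl n)%N &
      forall v, (v <= Fl n)%N -> v \notin s -> (v <= pick n s)%N].
Proof.
move=> hs; have [v0 hv0] := pick_ex hs.
rewrite /pick.
have [i hi heq] := @eq_bigmax_cond _ (fun v : 'I_(Fl n).+1 => (v:nat) \notin s) (fun v => nat_of_ord v) (ltac:(by apply/card_gt0P; exists v0)).
split.
- by rewrite heq.
- by rewrite heq -ltnS ltn_ord.
- move=> v hv hvs.
  exact: (@leq_bigmax_cond _ (fun v : 'I_(Fl n).+1 => (v:nat) \notin s) (fun v => nat_of_ord v) (Ordinal (hv : (v < (Fl n).+1)%N)) hvs).
Qed.

Hypothesis Flge : forall x, (x <= Fl x)%N.
Hypothesis Flmono : forall x y, (x <= y)%N -> (Fl x <= Fl y)%N.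

Lemma sg_spec x :
  [/\ sg x \notin mkseq sg x, (sg x <= Fl x)%N &
      forall v, (v <= Fl x)%N -> v \notin mkseq sg x -> (v <= sg x)%N].
Proof. by rewrite -gr_mk; apply: pick_spec; rewrite size_gr. Qed.

Lemma sg_le x : (sg x <= Fl x)%N.
Proof. by case: (sg_spec x). Qed.

Lemma sg_new x y : (y < x)%N -> sg y <> sg x.
Proof.
move=> hyx e; case: (sg_spec x) => /negP h _ _; apply: h.
by rewrite -e; apply/mapP; exists y => //; rewrite mem_iota.
Qed.

Lemma sg_inj x y : sg x = sg y -> x = y.
Proof.
move=> e; case: (ltngtP x y) => // h; first by case: (sg_new h).
by case: (sg_new h).
Qed.

Lemma sg_max x v : (v <= Fl x)%N -> (forall y, (y < x)%N -> sg y <> v) -> (v <= sg x)%N.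
Proof.
move=> hv hn; case: (sg_spec x) => _ _; apply => //.
apply/negP => /mapP [y]; rewrite mem_iota => /andP [_ hy] e.
by apply: (hn y); rewrite ?e.
Qed.

Lemma sg_pm x : (forall y, (y <= x)%N -> (sg y <= Fl x)%N) /\ exists2 y, (y <= x)%N & sg y = Fl x.
Proof.
split; first by move=> y hy; apply: leq_trans (sg_le y) (Flmono hy).
elim: x => [|x [y hy ey]].
  exists 0%N => //; apply/eqP; rewrite eqn_leq sg_le /=; apply: sg_max => //.
case: (ltngtP (Fl x) (Fl x.+1)) => h.
- exists x.+1 => //; apply/eqP; rewrite eqn_leq sg_le /=; apply: sg_max => // z hz e.
  have := leq_trans (sg_le z) (Flmono (hz : (z <= x)%N)); rewrite e; lia.
- by have := Flmono (leqnSn x); lia.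
- by exists y => //; [apply: leqW | rewrite ey h].
Qed.

Lemma sg_312 a b e : (a < b)%N -> (b < e)%N -> ~ ((sg b < sg e)%N /\ (sg e < sg a)%N).
Proof.
move=> hab hbe [h1 h2].
have : (sg e <= sg b)%N.
  apply: sg_max.
  - apply: leq_trans (ltnW h2) _; apply: leq_trans (sg_le a) _; apply: Flmono; lia.
  - move=> y hy ey; have := sg_inj ey; lia.
lia.
Qed.

Variable d : nat.
Hypothesis Fllt : forall x, (x < d)%N -> (Fl x < d)%N.

Lemma sg_lt x : (x < d)%N -> (sg x < d)%N.
Proof. move=> h; exact: leq_ltn_trans (sg_le x) (Fllt h). Qed.

Lemma sg_perm : perm_eq (mkseq sg d) (iota 0 d).
Proof.
have u : uniq (mkseq sg d).
  rewrite map_inj_in_uniq ?iota_uniq // => x y _ _; exact: sg_inj.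
have sub : {subset mkseq sg d <= iota 0 d}.
  move=> v /mapP [x]; rewrite !mem_iota => /andP [_ hx] ->; rewrite sg_lt //.
have [_ h] := uniq_min_size u sub (ltac:(by rewrite size_mkseq size_iota)).
by apply: uniq_perm => //; exact: iota_uniq.
Qed.

Lemma sg_surj v : (v < d)%N -> exists2 x, (x < d)%N & sg x = v.
Proof.
move=> hv; have : v \in mkseq sg d by rewrite (perm_mem sg_perm) mem_iota.
by case/mapP => x; rewrite mem_iota => /andP [_ hx] ->; exists x.
Qed.

End Greedy.

End MG.
Import MG.

Module MC.
Set Implicit Arguments. Unset Strict Implicit. Unset Printing Implicit Defensive.
Import Order.TTheory GRing.Theory Num.Theory.

Definition incrh (t : seq nat) := if t is a :: t' then a.+1 :: t' else [::].

Fixpoint comps (m : nat) : nat -> seq (seq nat) :=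
  if m is m'.+1 then
    fix cn n := if n is n'.+1 then map incrh (cn n') ++ map (cons 0%N) (comps m' n'.+1)
                else [:: nseq m'.+1 0%N]
  else fun n => if n is 0 then [:: [::]] else [::].

Lemma sumn0_nseq t : sumn t = 0%N -> t = nseq (size t) 0%N.
Proof. elim: t => //= a t IH h; congr cons; [lia | apply: IH; lia]. Qed.

Lemma comps_mem m n t : (t \in comps m n) = (size t == m) && (sumn t == n).
Proof.
elim: m n t => [|m IHm] n t.
  case: n => [|n] /=; rewrite ?inE; case: t => //= a t; rewrite ?andbF //.
elim: n t => [|n IHn] t.
  rewrite /= inE; apply/eqP/andP => [->|[/eqP hs /eqP hsum]].
    by split; rewrite /= ?size_nseq ?sumn_nseq ?muln0.
  case: t hs hsum => //= a t [hs] hsum.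
  have ha : a = 0%N by lia.
  have ht : sumn t = 0%N by lia.
  by rewrite ha (sumn0_nseq ht) hs.
change (comps m.+1 n.+1) with (map incrh (comps m.+1 n) ++ map (cons 0%N) (comps m n.+1)).
rewrite mem_cat; case: t => [|a t].
  rewrite /=; apply/negbTE/negP; case/orP => /mapP [u]; last by [].
  by case: u => //; rewrite IHn.
case: a => [|a].
  apply/idP/idP.
  - case/orP => /mapP [u].
      by rewrite IHn; case: u => //= b u _ [].
    rewrite IHm => /andP [/eqP hs /eqP hsum] [] ->; by rewrite /= hs hsum !eqxx.
  - rewrite /= eqSS add0n => /andP [/eqP hs /eqP hsum]; apply/orP; right; apply/mapP; exists t => //.
    by rewrite IHm hs hsum !eqxx.
apply/idP/idP.
- case/orP => /mapP [u].
    rewrite IHn; case: u => //= b u; rewrite eqSS => /andP [/eqP hs /eqP hsum] [-> ->].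
    by rewrite /= hs eqxx /= addSn hsum.
  by move=> _ [].
- rewrite /= eqSS addSn eqSS => /andP [/eqP hs /eqP hsum]; apply/orP; left; apply/mapP; exists (a :: t) => //.
  by rewrite IHn /= hs hsum !eqxx.
Qed.

Lemma comps_uniq m n : uniq (comps m n).
Proof.
elim: m n => [|m IHm] n; first by case: n.
elim: n => [|n IHn] //.
change (comps m.+1 n.+1) with (map incrh (comps m.+1 n) ++ map (cons 0%N) (comps m n.+1)).
rewrite cat_uniq; apply/and3P; split.
- rewrite map_inj_in_uniq // => u v; rewrite !comps_mem.
  by case: u => // a u; case: v => // b v _ _ /= [-> ->].
- apply/hasPn => t /mapP [u _ ->]; apply/negP => /mapP [v _]; by case: v.
- by rewrite map_inj_uniq // => u v [].
Qed.

Lemma size_comps m n : size (comps m.+1 n) = 'C(n + m, n).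
Proof.
elim: m n => [|m IHm] n.
  elim: n => [|n IHn] //.
  change (comps 1 n.+1) with (map incrh (comps 1 n) ++ map (cons 0%N) (comps 0 n.+1)).
  by rewrite size_cat size_map IHn /= !addn0 !binn.
elim: n => [|n IHn]; first by rewrite bin0.
change (comps m.+2 n.+1) with (map incrh (comps m.+2 n) ++ map (cons 0%N) (comps m.+1 n.+1)).
rewrite size_cat !size_map IHn IHm.
by rewrite !addSn !addnS [in RHS]binS addnC.
Qed.

End MC.
Import MC.

Module ML.
Set Implicit Arguments. Unset Strict Implicit. Unset Printing Implicit Defensive.
Import Order.TTheory GRing.Theory Num.Theory.

Section Lindley.
Variable r : seq nat.

Fixpoint traj (x j : nat) : nat :=
  if j is j'.+1 then (traj x j').-1 + nth 0 r j' else x.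

Lemma traj_mono x y j : x <= y -> traj x j <= traj y j.
Proof. move=> h; elim: j => //= j IH; rewrite leq_add2r; lia. Qed.

Lemma traj_sum x m : traj x m + m = x + \sum_(0 <= j < m) nth 0 r j + \sum_(0 <= j < m) (traj x j == 0 : nat).
Proof.
elim: m => [|m IH]; first by rewrite !big_geq // !addn0.
rewrite !big_nat_recr //=; move: IH; case: (traj x m) => [|t] /=; lia.
Qed.

Lemma traj_ge x j : x - j <= traj x j.
Proof. elim: j => [|j IH] /=; lia. Qed.

Lemma ivt (h : nat -> nat) : (forall x y, x <= y -> h x <= h y) ->
  forall n, h n < n -> exists x, h x = x.
Proof.
move=> hm; elim => [|n IH] hn //.
case: (ltnP (h n) n) => h1; first exact: IH.
exists n; have := hm _ _ (leqnSn n); lia.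
Qed.

Lemma traj_fix d k : size r = d -> sumn r = d - k -> 0 < k -> k <= d ->
  exists x, traj x d = x /\ \sum_(0 <= j < d) (traj x j == 0 : nat) = k.
Proof.
move=> hs hsum hk hkd.
have sr : \sum_(0 <= j < d) nth 0 r j = d - k.
  by rewrite -hsum -hs sumnE [in RHS](big_nth 0%N).
have [x hx] : exists x, traj x d = x.
  apply: (@ivt (fun x => traj x d) (fun x y h => traj_mono d h) d).
  have z : \sum_(0 <= j < d) (traj d j == 0 : nat) = 0.
    rewrite big1_seq // => j /andP [_ hj]; rewrite mem_index_iota in hj.
    have := traj_ge d j; case: (traj d j) => //; lia.
  have := traj_sum d d; rewrite sr z; lia.
exists x; split => //; have := traj_sum x d; rewrite sr hx; lia.
Qed.
End Lindley.

End ML.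
Import ML.

Module MZ.
Set Implicit Arguments. Unset Strict Implicit. Unset Printing Implicit Defensive.
Import Order.TTheory GRing.Theory Num.Theory.
Local Open Scope ring_scope.

Lemma euclid (d : nat) (i : int) : (0 < d)%N ->
  [/\ (0 <= (i %% d)%Z), ((i %% d)%Z < d%:Z) & i = (i %% d)%Z + (i %/ d)%Z * d%:Z].
Proof.
move=> hd; split; first by apply: modz_ge0; lia.
  by apply: ltz_pmod; lia.
by rewrite addrC -divz_eq.
Qed.

Lemma decomp_uniq (d : nat) (t t' x x' : int) : (0 < d)%N ->
  0 <= x < d%:Z -> 0 <= x' < d%:Z -> x + t * d%:Z = x' + t' * d%:Z -> t = t' /\ x = x'.
Proof. move=> hd h1 h2 e. have : t = t' by nia. move=> ett; split => //; rewrite ett in e; lia. Qed.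

Lemma sum_perm_nat (R : zmodType) (d : nat) (f : nat -> nat) (F : nat -> R) :
  (forall x y, (x < d)%N -> (y < d)%N -> f x = f y -> x = y) ->
  (forall x, (x < d)%N -> (f x < d)%N) ->
  \sum_(x < d) F (f x) = \sum_(x < d) F x.
Proof.
move=> finj flt.
have u : uniq (map f (iota 0 d)).
  rewrite map_inj_in_uniq ?iota_uniq // => x y; rewrite !mem_iota => /andP [_ hx] /andP [_ hy].
  exact: finj.
have sub : {subset map f (iota 0 d) <= iota 0 d}.
  move=> v /mapP [x]; rewrite !mem_iota => /andP [_ hx] ->; by rewrite flt.
have [_ h] := uniq_min_size u sub (ltac:(by rewrite size_map size_iota)).
have pe : perm_eq (map f (iota 0 d)) (iota 0 d) by apply: uniq_perm => //; exact: iota_uniq.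
rewrite -(big_mkord xpredT (fun x => F (f x))) -(big_mkord xpredT F) /index_iota subn0 -(big_map f xpredT F).
exact: perm_big.
Qed.

Lemma resid_sum (d : nat) (v : nat -> int) (b : int) : (0 < d)%N ->
  (forall x y t, (x < d)%N -> (y < d)%N -> v x = v y + t * d%:Z -> x = y) ->
  (forall x, (x < d)%N -> v x <= b) ->
  \sum_(x < d) (x%:Z) <= \sum_(x < d) (b - v x) /\
  (\sum_(x < d) (b - v x) = \sum_(x < d) (x%:Z) -> forall x, (x < d)%N -> b - v x < d%:Z).
Proof.
move=> hd hinj hle.
pose m x := absz ((b - v x) %% d)%Z.
have hm x : (x < d)%N -> [/\ (m x < d)%N, 0 <= b - v x - (m x)%:Z &
                            exists t : int, b - v x = (m x)%:Z + t * d%:Z].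
  move=> hx; have [h1 h2 h3] := euclid (b - v x) hd.
  have ev : (m x)%:Z = ((b - v x) %% d)%Z by rewrite /m; lia.
  have := divz_ge0 (b - v x) (d := d%:Z) ltac:(lia).
  have := hle x hx; rewrite ev => h4 h5; split; [lia| nia |].
  by exists ((b - v x) %/ d)%Z.
have minj x y : (x < d)%N -> (y < d)%N -> m x = m y -> x = y.
  move=> hx hy e; have [_ _ [t ht]] := hm x hx; have [_ _ [t' ht']] := hm y hy.
  apply: (hinj x y (t' - t) hx hy); rewrite e in ht; lia.
have sm : \sum_(x < d) ((m x)%:Z) = \sum_(x < d) (x%:Z).
  apply: (@sum_perm_nat _ d m Posz) => // x hx; by case: (hm x hx).
have dec : \sum_(x < d) (b - v x) = \sum_(x < d) (x%:Z) + \sum_(x < d) (b - v x - (m x)%:Z).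
  by rewrite -sm -big_split /=; apply: eq_bigr => i _; lia.
have pos : 0 <= \sum_(x < d) (b - v x - (m x)%:Z).
  by apply: sumr_ge0 => i _; case: (hm i (ltn_ord i)).
split; first by rewrite dec; lia.
move=> e x hx.
have z : \sum_(x < d) (b - v x - (m x)%:Z) = 0 by move: e; rewrite dec; lia.
have hp : forall i : 'I_d, xpredT i -> 0 <= b - v i - (m i)%:Z.
  by move=> i _; case: (hm i (ltn_ord i)).
have h0 : b - v (Ordinal hx) - (m (Ordinal hx))%:Z = 0 := psumr_eq0P hp z isT.
move: h0 => /=; case: (hm x hx) => h1 _ _ /=; lia.
Qed.

Definition isMax (p : int -> int) (j m : int) :=
  (forall i, i <= j -> p i <= m) /\ exists2 i, i <= j & p i = m.

Lemma isMax_uniq p j m m' : isMax p j m -> isMax p j m' -> m = m'.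
Proof.
move=> [h1 [i1 hi1 e1]] [h2 [i2 hi2 e2]].
have := h1 _ hi2; have := h2 _ hi1; rewrite e1 e2; lia.
Qed.

Lemma sum_const_sub (d : nat) (b : int) (v : nat -> int) :
  \sum_(x < d) (b - v x) = b * d%:Z - \sum_(x < d) v x.
Proof. by rewrite sumrB sumr_const card_ord -mulr_natr natz. Qed.

Lemma sum_lin (d : nat) (a : int) :
  \sum_(x < d) (a + x%:Z) = a * d%:Z + \sum_(x < d) x%:Z.
Proof. by rewrite big_split /= sumr_const card_ord -mulr_natr natz. Qed.

Lemma gauss (d : nat) : (\sum_(x < d) x%:Z) * 2 = d%:Z * (d%:Z - 1).
Proof.
elim: d => [|d IH]; first by rewrite big_ord0.
rewrite big_ord_recr /= mulrDl IH; lia.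
Qed.

Lemma per_sum (d : nat) (f : int -> int) : (0 < d)%N ->
  (forall i, f (i + d%:Z) = f i) ->
  forall a, \sum_(x < d) f (a + x%:Z) = \sum_(x < d) f x%:Z.
Proof.
move=> hd hf.
have step a : \sum_(x < d) f (a + 1 + x%:Z) = \sum_(x < d) f (a + x%:Z).
  case: d hd hf => // d _ hf.
  rewrite big_ord_recr big_ord_recl /=.
  have -> : f (a + 1 + d%:Z) = f a by rewrite -(hf a); congr f; lia.
  rewrite addrC; congr (_ + _); first by rewrite addr0.
  apply: eq_bigr => i _; congr f; rewrite /bump leq0n; lia.
have hpos n : \sum_(x < d) f (n%:Z + x%:Z) = \sum_(x < d) f (0 + x%:Z).
  elim: n => // n IH; rewrite -IH -(step n%:Z); apply: eq_bigr => i _; congr f; lia.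
have hneg n : \sum_(x < d) f (- n%:Z + x%:Z) = \sum_(x < d) f (0 + x%:Z).
  elim: n => [|n IH]; first by apply: eq_bigr => i _; congr f; lia.
  rewrite -IH -step; apply: eq_bigr => i _; congr f; lia.
move=> a; have -> : \sum_(x < d) f x%:Z = \sum_(x < d) f (0 + x%:Z) by apply: eq_bigr => i _; rewrite add0r.
case: a => n; first exact: hpos.
have := hneg n.+1; rewrite NegzE => <-; done.
Qed.

Section Aff.
Variable d : nat.
Hypothesis hd : (0 < d)%N.
Variable p : int -> int.
Hypothesis pinj : injective p.
Hypothesis per : forall i, p (i + d%:Z) = p i + d%:Z.
Hypothesis sum0 : \sum_(i < d) (p (Posz i) - Posz i) = 0.

Lemma per_nat i (t : nat) : p (i + t%:Z * d%:Z) = p i + t%:Z * d%:Z.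
Proof.
elim: t => [|t IH]; first by rewrite mul0r !addr0.
have -> : i + t.+1%:Z * d%:Z = (i + t%:Z * d%:Z) + d%:Z by lia.
rewrite per IH; lia.
Qed.

Lemma per_int i (t : int) : p (i + t * d%:Z) = p i + t * d%:Z.
Proof.
case: t => n; first exact: per_nat.
have := per_nat (i + (Negz n) * d%:Z) n.+1.
have -> : i + Negz n * d%:Z + n.+1%:Z * d%:Z = i by rewrite NegzE; lia.
move=> ->; rewrite NegzE; lia.
Qed.

Lemma winsum a : \sum_(x < d) (p (a + x%:Z) - (a + x%:Z)) = 0.
Proof.
have := @per_sum d (fun i => p i - i) hd (ltac:(move=> i /=; rewrite per; lia)) a.
by move=> ->.
Qed.

Lemma winsum' a : \sum_(x < d) p (a + x%:Z) = a * d%:Z + \sum_(x < d) x%:Z.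
Proof. by have := winsum a; rewrite sumrB sum_lin => /eqP; rewrite subr_eq0 => /eqP. Qed.

Lemma resinj a x y t : (x < d)%N -> (y < d)%N -> p (a + x%:Z) = p (a + y%:Z) + t * d%:Z -> x = y.
Proof.
move=> hx hy; rewrite -per_int => /pinj e.
have [] := @decomp_uniq d 0 t x%:Z y%:Z hd ltac:(lia) ltac:(lia) ltac:(lia).
lia.
Qed.

Lemma isMax_shift j m (t : int) : isMax p j m -> isMax p (j + t * d%:Z) (m + t * d%:Z).
Proof.
move=> [h1 [i hi e]]; split.
  move=> i' hi'; have := h1 (i' - t * d%:Z) ltac:(lia).
  have := per_int (i' - t * d%:Z) t; rewrite subrK => ->; lia.
exists (i + t * d%:Z); [lia | by rewrite per_int e].
Qed.

Lemma Fge j m : isMax p j m -> j <= m.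
Proof.
move=> [h1 _].
pose a := j - d%:Z + 1.
have [hR _] := @resid_sum d (fun x => p (a + x%:Z)) m hd (@resinj a) (fun x hx => h1 (a + x%:Z) ltac:(rewrite /a; lia)).
move: hR; rewrite (sum_const_sub d m (fun x => p (a + x%:Z))) winsum'.
have := gauss d; rewrite /a; nia.
Qed.

Lemma cut1 j : isMax p j j -> is_cut_point p j.
Proof.
move=> [h1 h1'].
pose a := j - d%:Z + 1.
have [_ hR] := @resid_sum d (fun x => p (a + x%:Z)) j hd (@resinj a) (fun x hx => h1 (a + x%:Z) ltac:(rewrite /a; lia)).
have heq : \sum_(x < d) (j - p (a + x%:Z)) = \sum_(x < d) x%:Z.
  rewrite (sum_const_sub d j (fun x => p (a + x%:Z))) winsum'; have := gauss d; rewrite /a; nia.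
have hgt : forall x, (x < d)%N -> j - d%:Z < p (a + x%:Z).
  move=> x hx; have := hR heq x hx; lia.
move=> i k hi hk.
have := h1 _ hi; move=> hpi.
have [e1 e2 e3] := euclid (k - a) hd.
pose x := absz ((k - a) %% d)%Z.
have hx : (x < d)%N by rewrite /x; lia.
have ex : (x%:Z) = ((k - a) %% d)%Z by rewrite /x; lia.
have ht : 1 <= ((k - a) %/ d)%Z by rewrite /a in e3; nia.
have -> : k = a + x%:Z + ((k - a) %/ d)%Z * d%:Z by rewrite ex; lia.
rewrite per_int; have := hgt x hx; nia.
Qed.

Lemma cut2 j m : is_cut_point p j -> isMax p j m -> m = j.
Proof.
move=> hc hm; have := Fge hm; have [h1 [i0 hi0 e0]] := hm => hjm.
pose a := j + 1.
have hinj : forall x y t, (x < d)%N -> (y < d)%N -> - p (a + x%:Z) = - p (a + y%:Z) + t * d%:Z -> x = y.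
  move=> x y t hx hy e; apply: (@resinj a x y (- t)) => //; lia.
have hle : forall x, (x < d)%N -> - p (a + x%:Z) <= - (m + 1).
  move=> x hx; have := hc i0 (a + x%:Z) hi0 ltac:(rewrite /a; lia); lia.
have [hR _] := @resid_sum d (fun x => - p (a + x%:Z)) (- (m + 1)) hd hinj hle.
move: hR; rewrite (sum_const_sub d (- (m + 1)) (fun x => - p (a + x%:Z))) sumrN winsum' /a; nia.
Qed.

Lemma blockP c : isMax p c c -> forall i, (c < p i) = (c < i).
Proof.
move=> hm i; have hc := cut1 hm; case: hm => h1 [i0 hi0 e0].
case: (ltrP c i) => h.
- by have := hc i0 i hi0 h; rewrite e0 => ->.
- by apply/negbTE; rewrite -leNgt; apply: h1.
Qed.

End Aff.

Definition avoid (p : int -> int) :=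
  ~ exists i j k : int, [/\ i < j, j < k, p j < p k & p k < p i].

Section Uniq.
Variable d : nat.
Hypothesis hd : (0 < d)%N.
Variables p q : int -> int.
Hypothesis pinj : injective p.
Hypothesis qinj : injective q.
Hypothesis psurj : forall y, exists x, p x = y.
Hypothesis pper : forall i, p (i + d%:Z) = p i + d%:Z.
Hypothesis qper : forall i, q (i + d%:Z) = q i + d%:Z.
Hypothesis psum : \sum_(i < d) (p (Posz i) - Posz i) = 0.
Hypothesis qsum : \sum_(i < d) (q (Posz i) - Posz i) = 0.
Hypothesis pav : avoid p.
Variable c : int.
Hypothesis pc : isMax p c c.
Hypothesis qc : isMax q c c.

Lemma asym j m : c < j <= c + d%:Z -> (forall i, c < i < j -> p i = q i) ->
  isMax p j m -> isMax q j m -> p j < q j -> False.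
Proof.
move=> hj hlt hp hq hpq.
have pc' : isMax p (c + d%:Z) (c + d%:Z) by have := isMax_shift hd pper psum 1 pc; rewrite mul1r.
have qc' : isMax q (c + d%:Z) (c + d%:Z) by have := isMax_shift hd qper qsum 1 qc; rewrite mul1r.
have hb1 := blockP hd pinj pper psum pc; have hb2 := blockP hd pinj pper psum pc'.
have hb3 := blockP hd qinj qper qsum qc; have hb4 := blockP hd qinj qper qsum qc'.
have [x hx] := psurj (q j).
have y1 : c < q j by rewrite hb3; lia.
have y2 : q j <= c + d%:Z by rewrite leNgt hb4 -leNgt; lia.
have x1 : c < x by rewrite -hb1 hx.
have x2 : x <= c + d%:Z by rewrite leNgt -hb2 hx -leNgt.
have xj : j < x.
  case: (ltrgtP x j) => h //.
  - have := hlt x ltac:(lia); rewrite hx => /qinj; lia.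
  - by move: hpq; rewrite -hx h; lia.
case: hp => hp1 [h hh ehp]; case: hq => hq1 _.
have qjm := hq1 j (lexx j).
have hne : p h <> q j by rewrite -hx => /pinj; lia.
have hpj : h <> j by move=> e; rewrite e in ehp; have := qjm; lia.
apply: pav; exists h, j, x; split; [lia | lia | lia | ].
by rewrite hx ehp; move: hne; rewrite ehp; lia.
Qed.

End Uniq.

Lemma uniq_block (d : nat) (hd : (0 < d)%N) (p q : int -> int)
  (pinj : injective p) (qinj : injective q)
  (psurj : forall y, exists x, p x = y) (qsurj : forall y, exists x, q x = y)
  (pper : forall i, p (i + d%:Z) = p i + d%:Z) (qper : forall i, q (i + d%:Z) = q i + d%:Z)
  (psum : \sum_(i < d) (p (Posz i) - Posz i) = 0) (qsum : \sum_(i < d) (q (Posz i) - Posz i) = 0)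
  (pav : avoid p) (qav : avoid q) (c : int) (pc : isMax p c c) (qc : isMax q c c) :
  (forall j, c < j <= c + d%:Z -> exists m, isMax p j m /\ isMax q j m) ->
  forall j, c < j <= c + d%:Z -> p j = q j.
Proof.
move=> hF.
suff H : forall n : nat, forall j, c < j <= c + d%:Z -> j <= c + n%:Z -> p j = q j.
  by move=> j hj; apply: (H d) => //; lia.
elim=> [|n IH] j hj hjn; first by lia.
case: (lerP j (c + n%:Z)) => hjn'; first exact: IH.
have hlt : forall i, c < i < j -> p i = q i by move=> i hi; apply: IH; lia.
have [m [hpm hqm]] := hF j hj.
case: (ltrgtP (p j) (q j)) => // h.
- by case: (asym hd pinj qinj psurj pper qper psum qsum pav pc qc hj hlt hpm hqm h).
- have hlt' : forall i, c < i < j -> q i = p i by move=> i hi; rewrite hlt.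
  by case: (asym hd qinj pinj qsurj qper pper qsum psum qav qc pc hj hlt' hqm hpm h).
Qed.

Definition maxl (x0 : int) (s : seq int) := foldr Num.max x0 s.

Lemma maxl_ge x0 s y : y \in x0 :: s -> y <= maxl x0 s.
Proof.
elim: s => [|a s IH]; first by rewrite inE => /eqP ->.
rewrite /= !inE => /orP [/eqP e|/orP [/eqP e|h]].
- have := IH (ltac:(by rewrite inE e eqxx)); rewrite /maxl /= e; lia.
- by rewrite e /maxl /=; lia.
- have := IH (ltac:(by rewrite inE h orbT)); rewrite /maxl /=; lia.
Qed.

Lemma maxl_in x0 s : maxl x0 s \in x0 :: s.
Proof.
elim: s => [|a s IH]; first by rewrite inE.
rewrite /maxl /= -/(maxl x0 s).
have [->|->] : Num.max a (maxl x0 s) = a \/ Num.max a (maxl x0 s) = maxl x0 s by lia.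
  by rewrite !inE eqxx orbT.
by move: IH; rewrite !inE => /orP [->|->]; rewrite ?orbT.
Qed.

Definition Fw (w : seq int) (d j : nat) : int :=
  maxl (w`_0 - d%:Z) [seq (if (r <= j)%N then w`_r else w`_r - d%:Z) | r <- iota 0 d].

Definition FwE (w : seq int) (d j : nat) : int :=
  if j == d then Fw w d 0 + d%:Z else Fw w d j.

Definition dec (w : seq int) (d : nat) : seq nat :=
  [seq absz ((FwE w d j.+1 - FwE w d j)%R - Posz (nat_of_bool (FwE w d j == j%:Z)))%R | j <- iota 0 d].

Lemma window_nth d p r : (r < d)%N -> (window d p)`_r = p r%:Z.
Proof. by move=> h; rewrite /window (nth_map 0%N) ?size_iota // nth_iota. Qed.

Section FwSec.
Variable d : nat.
Hypothesis hd : (0 < d)%N.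
Variable p : int -> int.
Hypothesis pinj : injective p.
Hypothesis per : forall i, p (i + d%:Z) = p i + d%:Z.
Hypothesis sum0 : \sum_(i < d) (p (Posz i) - Posz i) = 0.

Lemma Fw_isMax j : (j < d)%N -> isMax p j%:Z (Fw (window d p) d j).
Proof.
move=> hj.
pose el r := if (r <= j)%N then (window d p)`_r else (window d p)`_r - d%:Z.
have elin r : (r < d)%N -> el r <= Fw (window d p) d j.
  move=> hr; apply: maxl_ge; rewrite inE; apply/orP; right.
  by apply/mapP; exists r => //; rewrite mem_iota.
split.
- move=> i hi; have [e1 e2 e3] := euclid i hd.
  pose x := absz (i %% d)%Z.
  have hx : (x < d)%N by rewrite /x; lia.
  have ex : x%:Z = (i %% d)%Z by rewrite /x; lia.
  have ht : (i %/ d)%Z <= 0 by nia.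
  have := elin x hx; rewrite /el window_nth //.
  have -> : i = x%:Z + (i %/ d)%Z * d%:Z by rewrite ex -e3.
  rewrite (per_int hd per sum0).
  case: ifP => hxj.
  + nia.
  + have hxj' : (j < x)%N by rewrite ltnNge hxj.
    have ht' : (i %/ d)%Z <= -1 by nia.
    nia.
- have := maxl_in ((window d p)`_0 - d%:Z) [seq el r | r <- iota 0 d].
  rewrite -/(Fw (window d p) d j) inE => /orP [/eqP ->|/mapP [r]].
    exists (-1 * d%:Z); first by lia.
    by rewrite window_nth // -(add0r (-1 * d%:Z)) (per_int hd per sum0) mulN1r.
  rewrite mem_iota add0n => /andP [_ hr] ->; rewrite /el window_nth //.
  case: ifP => hrj.
    by exists r%:Z => //; lia.
  exists (r%:Z + -1 * d%:Z); first by move: hrj; lia.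
  by rewrite (per_int hd per sum0); lia.
Qed.

Lemma FwE_isMax j : (j <= d)%N -> isMax p j%:Z (FwE (window d p) d j).
Proof.
move=> hj; rewrite /FwE; case: eqP => [->|hne].
  by have := isMax_shift hd per sum0 1 (Fw_isMax hd); rewrite mul1r add0r.
by apply: Fw_isMax; lia.
Qed.

End FwSec.

Definition stp (x : int) : int := if x == 0 then 0 else x - 1.

Section Lind.
Variable d : nat.
Variables e : nat -> int.

Lemma lind_half (g g' : nat -> int) :
  (forall j, (j <= d)%N -> 0 <= g j) -> (forall j, (j <= d)%N -> 0 <= g' j) ->
  (forall j, (j < d)%N -> g j.+1 = stp (g j) + e j) ->
  (forall j, (j < d)%N -> g' j.+1 = stp (g' j) + e j) ->
  g d = g 0 -> g' d = g' 0 -> (exists2 j1, (j1 <= d)%N & g' j1 = 0) ->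
  g 0 <= g' 0 -> forall j, (j <= d)%N -> g j = g' j.
Proof.
move=> g0 g0' hg hg' gd gd' [j1 hj1 z1] h0.
have fle : forall j, (j <= d)%N -> g j <= g' j.
  elim=> // j IH hj; rewrite hg // hg' //.
  have := IH (ltnW hj); have := g0 j (ltnW hj); rewrite /stp.
  case: eqP => ?; case: eqP => ?; lia.
have feq : forall j0, g j0 = g' j0 -> forall j, (j0 <= j <= d)%N -> g j = g' j.
  move=> j0 e0; elim=> [|j IH] hj.
    have h00 : j0 = 0%N by lia.
    by rewrite -h00.
  case: (ltngtP j0 j.+1) => h; last by rewrite -h.
  - by rewrite hg ?hg' ?IH //; lia.
  - lia.
have := fle j1 hj1; rewrite z1 => hz; have := g0 j1 hj1 => hz'.
have e1 : g j1 = g' j1 by lia.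
have ed := feq j1 e1 d ltac:(lia).
have e0 : g 0 = g' 0 by rewrite -gd -gd'.
by move=> j hj; apply: (feq 0%N e0); lia.
Qed.

Lemma lind_uniq (g g' : nat -> int) :
  (forall j, (j <= d)%N -> 0 <= g j) -> (forall j, (j <= d)%N -> 0 <= g' j) ->
  (forall j, (j < d)%N -> g j.+1 = stp (g j) + e j) ->
  (forall j, (j < d)%N -> g' j.+1 = stp (g' j) + e j) ->
  g d = g 0 -> g' d = g' 0 -> (exists2 j0, (j0 <= d)%N & g j0 = 0) ->
  (exists2 j1, (j1 <= d)%N & g' j1 = 0) ->
  forall j, (j <= d)%N -> g j = g' j.
Proof.
move=> g0 g0' hg hg' gd gd' z0 z1.
case: (lerP (g 0) (g' 0)) => h; first exact: lind_half.
move=> j hj; symmetry; apply: (lind_half g0' g0 hg' hg gd' gd z0) => //; lia.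
Qed.
End Lind.

Lemma sumn_absz (s : seq nat) (e : nat -> int) : (forall j, j \in s -> 0 <= e j) ->
  (sumn [seq absz (e j) | j <- s])%:Z = \sum_(j <- s) e j.
Proof.
elim: s => [|a s IH] h; first by rewrite big_nil.
have IH' := IH (fun j hj => h j (ltac:(by rewrite inE hj orbT))).
rewrite big_cons /= PoszD IH'. have := h a (mem_head a s).
move=> ha; congr (_ + _); lia. Qed.

Definition valid d k p := [/\ is_affine_perm d p, avoids312 p & has_cut_classes d p k].

Lemma aff_parts d p : is_affine_perm d p ->
  [/\ injective p, forall y, exists x, p x = y,
      (forall i, p (i + d%:Z) = p i + d%:Z) & \sum_(i < d) (p (Posz i) - Posz i) = 0].
Proof.
move=> [hb [hper hsum]]; split => //; first exact: bij_inj.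
by case: hb => g _ gK y; exists (g y); apply: gK.
Qed.

Section Val.
Variable d : nat.
Hypothesis hd : (0 < d)%N.
Variable p : int -> int.
Hypothesis hp : is_affine_perm d p.

Let w := window d p.
Let F := FwE w d.

Lemma F_isMax j : (j <= d)%N -> isMax p j%:Z (F j).
Proof. have [pinj _ per sum0] := aff_parts hp; exact: FwE_isMax. Qed.

Lemma F_ge j : (j <= d)%N -> j%:Z <= F j.
Proof. have [pinj _ per sum0] := aff_parts hp => hj; exact: (Fge hd pinj per sum0 (F_isMax hj)). Qed.

Lemma e_nonneg j : (j < d)%N -> 0 <= (F j.+1 - F j)%R - Posz (nat_of_bool (F j == j%:Z)).
Proof.
move=> hj; have [_ [h hh eh]] := F_isMax (ltnW hj); have [h1 _] := F_isMax hj.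
have := h1 h ltac:(lia); have := F_ge hj.
case: eqP => /= e; lia.
Qed.

Lemma cut_iff r : (r < d)%N -> is_cut_point p r%:Z <-> F r = r%:Z.
Proof.
have [pinj _ per sum0] := aff_parts hp => hr; split.
  by move=> hc; apply: (cut2 hd pinj per sum0 hc); apply: F_isMax; lia.
by move=> e; apply: (cut1 hd pinj per sum0); rewrite -{2}e; apply: F_isMax; lia.
Qed.

Lemma count_fix k : has_cut_classes d p k -> \sum_(0 <= j < d) nat_of_bool (F j == j%:Z) = k.
Proof.
case=> S [hS hiff].
rewrite big_mkord -hS -sum1_card [RHS]big_mkcond /=; apply: eq_bigr => i _.
have := hiff i; rewrite (cut_iff (ltn_ord i)).
case: (i \in S); case: eqP => //= h [h1 h2]; first by case: h; exact: h1.
by have := h2 h.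
Qed.

Lemma dec_sum : (sumn (dec w d))%:Z = d%:Z - (\sum_(0 <= j < d) nat_of_bool (F j == j%:Z))%:Z.
Proof.
rewrite /dec sumn_absz; last by move=> j; rewrite mem_iota => /andP [_ hj]; apply: e_nonneg.
have ii : iota 0 d = index_iota 0 d by rewrite /index_iota subn0.
rewrite ii sumrB (@telescope_sumr _ 0 d (FwE w d)) //.
have -> : FwE w d d = FwE w d 0%N + d%:Z.
  by rewrite /FwE eqxx; have -> : (0 == d)%N = false by apply/eqP; lia.
have -> : forall x : int, x + d%:Z - x = d%:Z by move=> x; lia.
by rewrite (big_morph Posz PoszD (erefl 0%:Z)).
Qed.

End Val.

Lemma Dlem d k p : (0 < d)%N -> valid d k p -> dec (window d p) d \in comps d (d - k).
Proof.
move=> hd [hp _ hc]; rewrite comps_mem; apply/andP; split; first by rewrite size_map size_iota.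
have := dec_sum hd hp; rewrite (count_fix hd hp hc).
have : (k <= d)%N by case: hc => S [<- _]; rewrite -[X in (_ <= X)%N](card_ord d); apply: max_card.
move=> hk e; apply/eqP; lia.
Qed.

Lemma has_zero d k p : (0 < d)%N -> (0 < k)%N -> valid d k p ->
  exists2 r, (r < d)%N & FwE (window d p) d r = r%:Z.
Proof.
move=> hd hk [hp _ [S [hS hiff]]].
have : (0 < #|S|)%N by rewrite hS.
case/card_gt0P => r hr; exists r => //.
by apply/(cut_iff hd hp (ltn_ord r)); apply/hiff.
Qed.

Lemma Ulem d k k' p q : (0 < d)%N -> (0 < k)%N -> (0 < k')%N ->
  valid d k p -> valid d k' q -> dec (window d p) d = dec (window d q) d ->
  window d p = window d q.
Proof.
move=> hd hk hk' vp vq E.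
have [hp pav _] := vp; have [hq qav _] := vq.
have [pinj psurj pper psum] := aff_parts hp; have [qinj qsurj qper qsum] := aff_parts hq.
pose F := FwE (window d p) d; pose F' := FwE (window d q) d.
pose e j := (F j.+1 - F j)%R - Posz (nat_of_bool (F j == j%:Z)).
pose e' j := (F' j.+1 - F' j)%R - Posz (nat_of_bool (F' j == j%:Z)).
have hee : forall j, (j < d)%N -> e j = e' j.
  move=> j hj; have := congr1 (fun s => nth 0%N s j) E.
  rewrite /dec !(nth_map 0%N) ?size_iota // nth_iota // add0n.
  have := e_nonneg hd hp hj; have := e_nonneg hd hq hj; rewrite -/F -/F' -/(e j) -/(e' j).
  lia.
pose g j := F j - j%:Z; pose g' j := F' j - j%:Z.
have FFd : forall (r : int -> int), is_affine_perm d r -> FwE (window d r) d d = FwE (window d r) d 0%N + d%:Z.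
  by move=> r _; rewrite /FwE eqxx; have -> : (0 == d)%N = false by apply/eqP; lia.
have hFF : forall j, (j <= d)%N -> F j = F' j.
  have := @lind_uniq d e g g'.
  have g0 : forall j, (j <= d)%N -> 0 <= g j by move=> j hj; have := F_ge hd hp hj; rewrite /g -/F; lia.
  have g0' : forall j, (j <= d)%N -> 0 <= g' j by move=> j hj; have := F_ge hd hq hj; rewrite /g' -/F'; lia.
  have hg : forall j, (j < d)%N -> g j.+1 = stp (g j) + e j.
    by move=> j hj; rewrite /g /e /stp; case: eqP; case: eqP => /=; lia.
  have hg' : forall j, (j < d)%N -> g' j.+1 = stp (g' j) + e j.
    by move=> j hj; rewrite hee // /g' /e' /stp; case: eqP; case: eqP => /=; lia.
  have gd : g d = g 0%N by rewrite /g /F FFd //; lia.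
  have gd' : g' d = g' 0%N by rewrite /g' /F' FFd //; lia.
  have [r0 hr0 z0] := has_zero hd hk vp; have [r1 hr1 z1] := has_zero hd hk' vq.
  move=> /(_ g0 g0' hg hg' gd gd').
  have zz0 : exists2 j0, (j0 <= d)%N & g j0 = 0 by exists r0; [lia | rewrite /g /F z0; lia].
  have zz1 : exists2 j1, (j1 <= d)%N & g' j1 = 0 by exists r1; [lia | rewrite /g' /F' z1; lia].
  move=> /(_ zz0 zz1) H j hj; have := H j hj; rewrite /g /g'; lia.
have [r0 hr0 z0] := has_zero hd hk vp.
have pc : isMax p r0%:Z r0%:Z by rewrite -{2}z0; apply: (F_isMax hd hp); lia.
have qc : isMax q r0%:Z r0%:Z by rewrite -{2}z0 -/F hFF; [apply: (F_isMax hd hq) | ]; lia.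
have hblk : forall j, r0%:Z < j <= r0%:Z + d%:Z -> exists m, isMax p j m /\ isMax q j m.
  move=> j hj; case: (lerP j d%:Z) => hjd.
    have -> : j = (absz j)%:Z by lia.
    exists (F (absz j)); split; first by apply: (F_isMax hd hp); lia.
    by rewrite hFF; [apply: (F_isMax hd hq)|]; lia.
  have -> : j = (absz (j - d%:Z))%:Z + 1 * d%:Z by lia.
  exists (F (absz (j - d%:Z)) + 1 * d%:Z); split.
    by apply: (isMax_shift hd pper psum); apply: (F_isMax hd hp); lia.
  by rewrite hFF; [apply: (isMax_shift hd qper qsum); apply: (F_isMax hd hq)|]; lia.
have hb := uniq_block hd pinj qinj psurj qsurj pper qper psum qsum pav qav pc qc hblk.
rewrite /window; apply/eq_in_map => r; rewrite mem_iota add0n => /andP [_ hr].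
case: (ltnP r0 r) => h; first by apply: hb; lia.
have := hb (r%:Z + d%:Z) ltac:(lia); rewrite pper qper; lia.
Qed.

End MZ.
Import MZ.

Module ME.
Set Implicit Arguments. Unset Strict Implicit. Unset Printing Implicit Defensive.
Import Order.TTheory GRing.Theory Num.Theory.
Local Open Scope ring_scope.

Definition xi (d : nat) (b i : int) : nat := absz ((i - b) %% d)%Z.
Definition qq (d : nat) (b i : int) : int := ((i - b) %/ d)%Z.

Lemma split_spec d b i : (0 < d)%N -> (xi d b i < d)%N /\ i = b + (xi d b i)%:Z + qq d b i * d%:Z.
Proof.
move=> hd; have [e1 e2 e3] := euclid (i - b) hd.
rewrite /xi /qq; split; first lia.
have -> : (absz ((i - b) %% d)%Z)%:Z = ((i - b) %% d)%Z by lia.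
lia.
Qed.

Lemma split_uniq d b i (x : nat) t : (0 < d)%N -> (x < d)%N -> i = b + x%:Z + t * d%:Z ->
  xi d b i = x /\ qq d b i = t.
Proof.
move=> hd hx e; have [h1 h2] := split_spec b i hd.
have [] := @decomp_uniq d (qq d b i) t (xi d b i)%:Z x%:Z hd ltac:(lia) ltac:(lia) ltac:(lia).
move=> -> h; split => //; lia.
Qed.

Section Build.
Variables (d k : nat) (r : seq nat).
Hypothesis hk : (0 < k)%N.
Hypothesis hkd : (k <= d)%N.
Hypothesis hr : r \in comps d (d - k).

Lemma hd : (0 < d)%N. Proof. lia. Qed.
Lemma hsize : size r = d. Proof. by move: hr; rewrite comps_mem => /andP [/eqP]. Qed.
Lemma hsum : sumn r = (d - k)%N. Proof. by move: hr; rewrite comps_mem => /andP [_ /eqP]. Qed.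

Variable x0 : nat.
Hypothesis hx0 : traj r x0 d = x0.
Hypothesis hz : \sum_(0 <= j < d) (traj r x0 j == 0%N : nat) = k.
Variable c0 : nat.
Hypothesis hc0 : (c0 < d)%N.
Hypothesis gc0 : traj r x0 c0 = 0%N.

Let g j := traj r x0 j.
Definition G j := g (j %% d).

Lemma G_step j : G j.+1 = ((G j).-1 + nth 0%N r (j %% d))%N.
Proof.
rewrite /G /g; have hd' := hd.
have ej : j.+1 = (j %/ d * d + (j %% d).+1)%N by rewrite {1}(divn_eq j d) addnS.
have hm := ltn_pmod j hd'.
case: (ltnP (j %% d).+1 d) => h.
  by rewrite ej modnMDl modn_small.
have e1 : (j %% d = d.-1)%N by lia.
have -> : (j.+1 %% d = 0)%N by rewrite ej e1 prednK // -mulSnr modnMl.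
rewrite /= e1 -{1}hx0; case: d hd' {hm e1 h ej} => // d0 _.
Qed.

Definition Fl y := (y + G (c0.+1 + y))%N.

Lemma Flge y : (y <= Fl y)%N.
Proof. rewrite /Fl; lia. Qed.

Lemma Fl_step y : (Fl y <= Fl y.+1)%N.
Proof. rewrite /Fl addnS G_step; lia. Qed.

Lemma Flmono x y : (x <= y)%N -> (Fl x <= Fl y)%N.
Proof. exact: (homo_leq leqnn (fun _ _ _ => @leq_trans _ _ _) Fl_step). Qed.

Lemma Fl_last : Fl d.-1 = d.-1.
Proof.
have hd' := hd.
rewrite /Fl /G.
have -> : ((c0.+1 + d.-1) %% d = c0)%N by rewrite addSn -addnS prednK // modnDr modn_small.
by rewrite /g gc0 addn0.
Qed.

Lemma Fllt y : (y < d)%N -> (Fl y < d)%N.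
Proof. move=> hy; have := Flmono (ltac:(lia) : (y <= d.-1)%N); rewrite Fl_last; lia. Qed.

Let b := (c0.+1)%:Z.
Let sig := sg Fl.
Definition pp (i : int) : int := b + (sig (xi d b i))%:Z + qq d b i * d%:Z.

Lemma sig_lt x : (x < d)%N -> (sig x < d)%N.
Proof. exact: (sg_lt Flge Fllt). Qed.

Lemma pp_decomp (x : nat) (t : int) : (x < d)%N -> pp (b + x%:Z + t * d%:Z) = b + (sig x)%:Z + t * d%:Z.
Proof. move=> hx; rewrite /pp; have [-> ->] := @split_uniq d b (b + x%:Z + t * d%:Z) x t hd hx (erefl _); done. Qed.

Lemma pp_per i : pp (i + d%:Z) = pp i + d%:Z.
Proof.
have [h1 h2] := split_spec b i hd.
have -> : i + d%:Z = b + (xi d b i)%:Z + (qq d b i + 1) * d%:Z by rewrite {1}h2; lia.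
rewrite pp_decomp // /pp; lia.
Qed.

Lemma pp_inj : injective pp.
Proof.
move=> i j e.
have [hi1 hi2] := split_spec b i hd; have [hj1 hj2] := split_spec b j hd.
move: e; rewrite /pp => e.
have [] := @decomp_uniq d (qq d b i) (qq d b j) (sig (xi d b i))%:Z (sig (xi d b j))%:Z hd.
- by have := sig_lt hi1; lia.
- by have := sig_lt hj1; lia.
- lia.
move=> eq1 eq2; have ex : xi d b i = xi d b j by apply: (sg_inj Flge); case: eq2.
by rewrite hi2 hj2 ex eq1.
Qed.

Lemma pp_surj y : exists x, pp x = y.
Proof.
have [h1 h2] := split_spec b y hd.
have [x hx ex] := sg_surj Flge Fllt h1.
have ex' : sig x = xi d b y := ex.
exists (b + x%:Z + qq d b y * d%:Z); rewrite pp_decomp // ex'; lia.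
Qed.

Lemma pp_bij : bijective pp.
Proof.
have hs : forall y, exists x, pp x == y by move=> y; have [x hx] := pp_surj y; exists x; apply/eqP.
exists (fun y => xchoose (hs y)).
  by move=> x; apply: pp_inj; apply/eqP; exact: (xchooseP (hs (pp x))).
by move=> y; apply/eqP; exact: (xchooseP (hs y)).
Qed.

Lemma pp_sum : \sum_(i < d) (pp (Posz i) - Posz i) = 0.
Proof.
have hf : forall i, (fun i => pp i - i) (i + d%:Z) = (fun i => pp i - i) i by move=> i /=; rewrite pp_per; lia.
have := per_sum hd hf b => /= <-.
have -> : \sum_(x < d) (pp (b + x%:Z) - (b + x%:Z)) = \sum_(x < d) ((sig x)%:Z - x%:Z).
  apply: eq_bigr => x _; have := pp_decomp 0 (ltn_ord x); rewrite mul0r addr0 => ->; lia.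
rewrite sumrB (@sum_perm_nat _ d sig Posz) ?subrr //.
- by move=> x y _ _; apply: (sg_inj Flge).
- by move=> x hx; apply: sig_lt.
Qed.

Lemma pp_aff : is_affine_perm d pp.
Proof. split; [exact: pp_bij | split; [exact: pp_per | exact: pp_sum]]. Qed.

Lemma qq_mono i j : i <= j -> qq d b i <= qq d b j.
Proof.
move=> hij; have [hi1 hi2] := split_spec b i hd; have [hj1 hj2] := split_spec b j hd; nia.
Qed.

Lemma pp_bnd i : b + qq d b i * d%:Z <= pp i <= b + qq d b i * d%:Z + d%:Z - 1.
Proof.
have [h1 _] := split_spec b i hd; have := sig_lt h1; rewrite /pp; lia.
Qed.

Lemma pp_blk i j : qq d b i < qq d b j -> pp i < pp j.
Proof. move=> h; have := pp_bnd i; have := pp_bnd j; nia. Qed.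

Lemma pp_avoid : avoids312 pp.
Proof.
move=> [i [j [l [hij hjl h1 h2]]]].
have qij := qq_mono (ltW hij); have qjl := qq_mono (ltW hjl).
have eil : qq d b i = qq d b l.
  case: (ltrP (qq d b i) (qq d b l)) => h; last lia.
  by have := pp_blk h; lia.
have [hi1 hi2] := split_spec b i hd; have [hj1 hj2] := split_spec b j hd; have [hl1 hl2] := split_spec b l hd.
have eij : qq d b i = qq d b j by lia.
have x1 : (xi d b i < xi d b j)%N by nia.
have x2 : (xi d b j < xi d b l)%N by nia.
apply: (sg_312 Flge Flmono x1 x2); move: h1 h2; rewrite /pp -eij -eil /sig; lia.
Qed.

Definition Fz (j : int) : int := b + (Fl (xi d b j))%:Z + qq d b j * d%:Z.

Lemma pp_isMax j : isMax pp j (Fz j).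
Proof.
have [hj1 hj2] := split_spec b j hd.
have [pm1 [y hy ey]] := sg_pm Flge Flmono (xi d b j).
split.
- move=> i hij; have := qq_mono hij.
  rewrite le_eqVlt => /orP [/eqP e|h].
  + have [hi1 hi2] := split_spec b i hd.
    have hx : (xi d b i <= xi d b j)%N by nia.
    have := pm1 _ hx; rewrite /pp /Fz e -/sig; lia.
  + have := pp_blk h; have := pp_bnd i; rewrite /Fz; nia.
- exists (b + y%:Z + qq d b j * d%:Z); first by nia.
  have hyd : (y < d)%N by lia.
  by rewrite pp_decomp // /Fz /sig ey.
Qed.

Lemma G_per j : G (j + d) = G j.
Proof. by rewrite /G modnDr. Qed.

Lemma Fz_nat (j : nat) : (j <= d)%N -> Fz j%:Z = j%:Z + (G j)%:Z.
Proof.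
move=> hj; rewrite /Fz /Fl.
case: (ltnP c0 j) => h.
  have [-> ->] := @split_uniq d b j%:Z (j - c0.+1)%N 0 hd ltac:(lia) ltac:(rewrite /b; lia).
  have -> : (c0.+1 + (j - c0.+1) = j)%N by lia.
  rewrite /b; lia.
have [-> ->] := @split_uniq d b j%:Z (j + d - c0.+1)%N (-1) hd ltac:(lia) ltac:(rewrite /b; lia).
have -> : (c0.+1 + (j + d - c0.+1) = j + d)%N by lia.
rewrite G_per /b; lia.
Qed.

Lemma FwE_pp (j : nat) : (j <= d)%N -> FwE (window d pp) d j = j%:Z + (G j)%:Z.
Proof.
move=> hj; rewrite -Fz_nat //; apply: (isMax_uniq (F_isMax hd pp_aff hj)).
exact: pp_isMax.
Qed.

Lemma G_small j : (j < d)%N -> G j = g j.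
Proof. by move=> hj; rewrite /G modn_small. Qed.

Lemma pp_cuts : has_cut_classes d pp k.
Proof.
exists [set i : 'I_d | g i == 0%N]; split.
  rewrite -hz big_mkord -sum1_card [LHS]big_mkcond /=; apply: eq_bigr => i _.
  by rewrite inE /g; case: eqP.
move=> i; rewrite (cut_iff hd pp_aff (ltn_ord i)) FwE_pp; last by have := ltn_ord i; lia.
rewrite G_small //.
rewrite inE; split; first by move=> /eqP ->; lia.
by move=> h; apply/eqP; lia.
Qed.

Lemma pp_dec : dec (window d pp) d = r.
Proof.
apply: (@eq_from_nth _ 0%N); first by rewrite size_map size_iota hsize.
move=> j; rewrite size_map size_iota => hj.
rewrite (nth_map 0%N) ?size_iota // nth_iota // add0n !FwE_pp //; last lia.
rewrite G_step modn_small //.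
case: (G j) => [|t] /=; lia.
Qed.

End Build.

Lemma Elem d k r : (0 < k)%N -> (k <= d)%N -> r \in comps d (d - k) ->
  exists p, valid d k p /\ dec (window d p) d = r.
Proof.
move=> hk hkd hr.
have [x0 [hx0 hz]] := traj_fix (hsize hr) (hsum hr) hk hkd.
have [c0 hc0 gc0] : exists2 c0, (c0 < d)%N & traj r x0 c0 = 0%N.
  case: (boolP [exists c : 'I_d, traj r x0 c == 0%N]).
    by case/existsP => c /eqP h; exists c.
  rewrite negb_exists => /forallP hall.
  move: hz; rewrite big1_seq; first lia.
  move=> j /andP [_]; rewrite mem_index_iota => /andP [_ hj].
  by have := hall (Ordinal hj) => /= /negbTE ->.
exists (pp d r x0 c0); split; first split.
- exact: (pp_aff hk hkd hr hx0 hz hc0 gc0).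
- exact: (pp_avoid hk hkd hr hx0 hz hc0 gc0).
- exact: (pp_cuts hk hkd hr hx0 hz hc0 gc0).
- exact: (pp_dec hk hkd hr hx0 hz hc0 gc0).
Qed.

End ME.
Import ME.

Module MM.
Set Implicit Arguments. Unset Strict Implicit. Unset Printing Implicit Defensive.
Import Order.TTheory GRing.Theory Num.Theory.

Lemma build_list d k (hd : (0 < d)%N) (hk : (0 < k)%N) (hkd : (k <= d)%N) (Ls : seq (seq nat)) :
  uniq Ls -> (forall r, r \in Ls -> r \in comps d (d - k)) ->
  exists s : seq (seq int), [/\ uniq s, size s = size Ls &
    forall w, w \in s <-> exists p, [/\ valid d k p, w = window d p & dec w d \in Ls]].
Proof.
elim: Ls => [|r Ls IH] /=.
  move=> _ _; exists [::]; split => // w; split => //; by case=> p [].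
move=> /andP [rn u] hin.
have [s [us ss hs]] := IH u (fun r' h => hin r' (ltac:(by rewrite inE h orbT))).
have [p0 [vp0 dp0]] := Elem hk hkd (hin r (mem_head r Ls)).
exists (window d p0 :: s); split.
- rewrite /= us andbT; apply/negP => /hs [p [_ _ hd']].
  by move: rn; rewrite -dp0 hd'.
- by rewrite /= ss.
- move=> w; rewrite inE; split.
  + case/orP => [/eqP ->|/hs [p [vp -> hdl]]].
      by exists p0; split => //; rewrite dp0 mem_head.
    by exists p; split => //; rewrite inE hdl orbT.
  + case=> p [vp -> ]; rewrite inE => /orP [/eqP e|h].
      apply/orP; left; apply/eqP.
      by apply: (Ulem hd hk hk vp vp0); rewrite e dp0.
    by apply/orP; right; apply/hs; exists p.
Qed.


End MM.
Import MM.

Theorem theorem4p2 (d k : nat) (hk : (0 < k)%N) (hkd : (k <= d)%N) :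
  exists s : seq (seq int),
    [/\ uniq s,
        size s = 'C(2 * d - k - 1, d - 1)
      & forall w : seq int,
          w \in s <->
          exists p : int -> int,
            [/\ is_affine_perm d p, avoids312 p, has_cut_classes d p k
              & w = window d p]].
Proof.
have hd : (0 < d)%N by lia.
have [s [us ss hs]] := build_list hd hk hkd (comps_uniq d (d - k)) (fun r h => h).
exists s; split => //.
- rewrite ss; case: d hd hk hkd {hs us ss} => // d _ hk hkd.
  rewrite size_comps.
  have -> : (2 * d.+1 - k - 1 = (d - k.-1) + d)%N by lia.
  have -> : (d.+1 - k = d - k.-1)%N by lia.
  have -> : (d.+1 - 1 = d)%N by lia.
  by rewrite -(bin_sub (leq_addl (d - k.-1) d)) addnK.
- move=> w; split.
  + by case/hs => p [[h1 h2 h3] -> _]; exists p.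
  + case=> p [h1 h2 h3 ->]; apply/hs; exists p; split => //.
    exact: Dlem.
Qed.
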